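(* Let $F:\mathbb R^5\to\mathbb R$, $$F(a,b,c,d,A)=-2(a+c)-2\bigl[(ac+bd)\cos2A+(bc-ad)\sin2A\bigr]+a^2+b^2+c^2+d^2+1,$$ and let $\mathbb S=F^{-1}(0)$. Then at every point of $\mathbb S$ with $-\pi/2<A<\pi/2$, $a^2+b^2\ne0$ and $c^2+d^2\ne0$, the gradient of $F$ is nonzero (i.e. $\mathbb S$ has no singular points there).
   Context: Here $X_1=a+bi$, $X_2=c+di$, and $F=0$ is the equation $-2\,\mathrm{Re}(X_1+X_2)-2\,\mathrm{Re}(X_1\overline{X}_2e^{-2iA})+|X_1|^2+|X_2|^2+1=0$ written in real coordinates; $\mathbb S$ is called the basic variety. A singular point of $\mathbb S$ is a point of $\mathbb S$ at which all partial derivatives of $F$ vanish. *)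

(* Defs.v *)
From Stdlib Require Import Reals.
From Coquelicot Require Import Coquelicot.
Open Scope R_scope.

Definition F (a b c d A : R) : R :=
  - 2 * (a + c)
  - 2 * ((a * c + b * d) * cos (2 * A) + (b * c - a * d) * sin (2 * A))
  + a ^ 2 + b ^ 2 + c ^ 2 + d ^ 2 + 1.

Definition in_S (a b c d A : R) : Prop := F a b c d A = 0.

Definition singular_point (a b c d A : R) : Prop :=
  in_S a b c d A /\
  Derive (fun x => F x b c d A) a = 0 /\
  Derive (fun x => F a x c d A) b = 0 /\
  Derive (fun x => F a b x d A) c = 0 /\
  Derive (fun x => F a b c x A) d = 0 /\
  Derive (fun x => F a b c d x) A = 0.

(* Main.v *)
Require Import Defs.
From Stdlib Require Import Reals Lra.
From Coquelicot Require Import Coquelicot.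
Open Scope R_scope.

Theorem proposition3p4 (a b c d A : R) :
  in_S a b c d A ->
  - (PI / 2) < A < PI / 2 ->
  a ^ 2 + b ^ 2 <> 0 ->
  c ^ 2 + d ^ 2 <> 0 ->
  ~ singular_point a b c d A.
Proof.
  intros _ HA _ _ [_ [Ha [Hb [Hc [Hd _]]]]].
  unfold F in *.
  set (C := cos (2 * A)) in *. set (S := sin (2 * A)) in *.
  assert (Ea : Derive (fun x => - 2 * (x + c) - 2 * ((x * c + b * d) * C + (b * c - x * d) * S) + x ^ 2 + b ^ 2 + c ^ 2 + d ^ 2 + 1) a
     = -2 - 2 * (c * C - d * S) + 2 * a).
  { apply is_derive_unique. auto_derive; auto. ring. }
  assert (Eb : Derive (fun x => - 2 * (a + c) - 2 * ((a * c + x * d) * C + (x * c - a * d) * S) + a ^ 2 + x ^ 2 + c ^ 2 + d ^ 2 + 1) b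
     = - 2 * (d * C + c * S) + 2 * b).
  { apply is_derive_unique. auto_derive; auto. ring. }
  assert (Ec : Derive (fun x => - 2 * (a + x) - 2 * ((a * x + b * d) * C + (b * x - a * d) * S) + a ^ 2 + b ^ 2 + x ^ 2 + d ^ 2 + 1) c
     = -2 - 2 * (a * C + b * S) + 2 * c).
  { apply is_derive_unique. auto_derive; auto. ring. }
  assert (Ed : Derive (fun x => - 2 * (a + c) - 2 * ((a * c + b * x) * C + (b * c - a * x) * S) + a ^ 2 + b ^ 2 + c ^ 2 + x ^ 2 + 1) d
     = - 2 * (b * C - a * S) + 2 * d).
  { apply is_derive_unique. auto_derive; auto. ring. }
  rewrite Ea in Ha. rewrite Eb in Hb. rewrite Ec in Hc. rewrite Ed in Hd.
  assert (HCS : C * C + S * S = 1).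
  { unfold C, S. pose proof (sin2_cos2 (2 * A)). unfold Rsqr in H. lra. }
  assert (HC : C = -1).
  { assert (a = 1 + c * C - d * S) by lra.
    assert (c = 1 + a * C + b * S) by lra.
    assert (d = b * C - a * S) by lra.
    assert (c * C - d * S = C + a * (C * C + S * S)).
    { rewrite H0, H1. ring. }
    rewrite HCS in H2. lra. }
  assert (Hcos : 0 < cos A) by (apply cos_gt_0; lra).
  unfold C in HC. rewrite cos_2a_cos in HC.
  nra.
Qed.
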